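(* Let $k$ be a field of characteristic $\neq 2$, let $\mathcal O$ be the Lie algebra described in the context, and let $\mathcal I$ be a closed ideal of $\mathcal O$ with $J=J_{\mathcal I}=q(t)k[t]\neq 0$. Put $w_i=v_iq(t)$, $i=0,1,2$. Then $\mathcal I$ is one of the following ideals: (a) $\mathcal I=\mathcal OJt(t-1)\oplus k(w_0t\pm w_1t)\oplus k(w_0(t-1)\pm w_2(t-1))$ (four possibilities, the two signs chosen independently); (b) $\mathcal I=\mathcal OJt(t-1)\oplus\bigl(\bigoplus_{i=0}^2kw_it\bigr)\oplus k(w_0(t-1)\pm w_2(t-1))$ (two possibilities); in this case $\mathcal I=\mathcal OJt\oplus k(w_0\pm w_2)$; (c) $\mathcal I=\mathcal OJt(t-1)\oplus k(w_0t\pm w_1t)\oplus\bigl(\bigoplus_{i=0}^2kw_i(t-1)\bigr)$ (two possibilities); in this case $\mathcal I=\mathcal OJ(t-1)\oplus k(w_0\pm w_1)$; (d) $\mathcal I=\mathcal OJ$.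
   Context: $\mathcal O$ is the Lie algebra over $k$ which is a free $k[t]$-module with basis $v_0,v_1,v_2$, with $k[t]$-bilinear bracket determined by $[v_0,v_1]=-v_2(t-1)$, $[v_1,v_2]=-v_0$, $[v_2,v_0]=v_1t$ (it is isomorphic to the Onsager algebra). An ideal $\mathcal I$ of $\mathcal O$ is closed if $\{x\in\mathcal O:[x,\mathcal O]\subseteq\mathcal I\}=\mathcal I$. For an ideal $\mathcal I$, $J_{\mathcal I}=\{p(t)\in k[t]: v_0p(t)+v_1p_1(t)+v_2p_2(t)\in\mathcal I\text{ for some }p_1,p_2\in k[t]\}$ (an ideal of $k[t]$). For an ideal $J$ of $k[t]$, $\mathcal OJ=v_0J\oplus v_1J\oplus v_2J$, and $\mathcal OJt$, $\mathcal OJ(t-1)$, $\mathcal OJt(t-1)$ denote $\mathcal O$ applied to the ideals $Jt$, $J(t-1)$, $Jt(t-1)$. *)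

(* Defs.v *)
From HB Require Import structures.
From mathcomp Require Import all_boot all_order all_algebra.
Set Implicit Arguments. Unset Strict Implicit. Unset Printing Implicit Defensive.
Import GRing.Theory.
Local Open Scope ring_scope.

(* The Onsager-type Lie algebra O = k[t]v0 + k[t]v1 + k[t]v2, an element
   v0 p0 + v1 p1 + v2 p2 being represented by the triple (p0, p1, p2). *)
Definition Ob (k : fieldType) := ({poly k} * {poly k} * {poly k})%type.

Section Onsager.
Variable k : fieldType.

Definition mkO (p0 p1 p2 : {poly k}) : Ob k := (p0, p1, p2).
Definition c0 (x : Ob k) : {poly k} := x.1.1.
Definition c1 (x : Ob k) : {poly k} := x.1.2.
Definition c2 (x : Ob k) : {poly k} := x.2.

Definition zeroO : Ob k := mkO 0 0 0.
Definition addO (x y : Ob k) : Ob k :=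
  mkO (c0 x + c0 y) (c1 x + c1 y) (c2 x + c2 y).
Definition scaleO (a : k) (x : Ob k) : Ob k :=
  mkO (a *: c0 x) (a *: c1 x) (a *: c2 x).

(* k[t]-bilinear bracket with [v0,v1] = -v2(t-1), [v1,v2] = -v0,
   [v2,v0] = v1 t (and [vi,vi] = 0, antisymmetry). *)
Definition bracket (x y : Ob k) : Ob k :=
  mkO (- (c1 x * c2 y - c2 x * c1 y))
      ((c2 x * c0 y - c0 x * c2 y) * 'X)
      ((c0 x * c1 y - c1 x * c0 y) * (- ('X - 1))).

Definition is_ideal (I : Ob k -> Prop) : Prop :=
  [/\ I zeroO,
      (forall x y, I x -> I y -> I (addO x y)),
      (forall (a : k) x, I x -> I (scaleO a x)) &
      (forall x y, I x -> I (bracket x y))].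

Definition closed_ideal (I : Ob k -> Prop) : Prop :=
  forall x, (forall y, I (bracket x y)) <-> I x.

Definition J_of (I : Ob k -> Prop) (p : {poly k}) : Prop :=
  exists p1 p2, I (mkO p p1 p2).

Definition idmul (J : {poly k} -> Prop) (r : {poly k}) (p : {poly k}) : Prop :=
  exists p', J p' /\ p = p' * r.

Definition OJ (J : {poly k} -> Prop) (x : Ob k) : Prop :=
  [/\ J (c0 x), J (c1 x) & J (c2 x)].

Definition sum_span (A : Ob k -> Prop) (vs : seq (Ob k)) (x : Ob k) : Prop :=
  exists y, A y /\ exists cs : seq k, size cs = size vs /\
    x = addO y (foldr addO zeroO [seq scaleO c.1 c.2 | c <- zip cs vs]).

(* w_i r = v_i q r, where w_i = v_i q *)
Definition w0 (q r : {poly k}) : Ob k := mkO (q * r) 0 0.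
Definition w1 (q r : {poly k}) : Ob k := mkO 0 (q * r) 0.
Definition w2 (q r : {poly k}) : Ob k := mkO 0 0 (q * r).

End Onsager.

(* Main.v *)
Require Import Defs.
From HB Require Import structures.
From mathcomp Require Import all_boot all_order all_algebra.
From mathcomp Require Import ring.
From Stdlib Require Import Classical.
Import GRing.Theory.
Local Open Scope ring_scope.

Section Classify.
Variable k : fieldType.
Variable P : k -> k -> k -> Prop.
Hypothesis two : (2:k) != 0.
Hypothesis Padd : forall {a b c a' b' c'}, P a b c -> P a' b' c' -> P (a+a') (b+b') (c+c').
Hypothesis Pscale : forall l {a b c}, P a b c -> P (l*a) (l*b) (l*c).
Hypothesis Pid : forall {a b c}, P a b c -> [/\ P 0 c 0, P c 0 0 & P (-b) (-a) 0].
Hypothesis Pcl : forall a b c, P 0 c 0 -> P c 0 0 -> P (-b) (-a) 0 -> P a b c.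
Hypothesis Pnd : exists a b c, a != 0 /\ P a b c.

Lemma Peq {a b c a' b' c'} : P a b c -> a = a' -> b = b' -> c = c' -> P a' b' c'.
Proof. by move=> H <- <- <-. Qed.

Lemma Pall : P 1 0 0 -> P 0 1 0 -> forall a b c, P a b c.
Proof.
move=> H1 H2 a b c; apply: Pcl.
- by apply: (Peq (Pscale c H2)); ring.
- by apply: (Peq (Pscale c H1)); ring.
- by apply: (Peq (Padd (Pscale (-b) H1) (Pscale (-a) H2))); ring.
Qed.

Lemma Psym {a b} : P a b 0 -> P (a+b) (a+b) 0 /\ P (a-b) (b-a) 0.
Proof.
move=> H; have [_ _ H'] := Pid H.
have [_ _ H''] := Pid H'.
have H3 := Pscale (-1) H'.
split.
- by apply: (Peq (Padd H H3)); ring.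
- by apply: (Peq (Padd H (Pscale (-1) H3))); ring.
Qed.

Lemma Pnorm {a b} : a != 0 -> P a b 0 -> P 1 (a^-1 * b) 0.
Proof. move=> Ha H; apply: (Peq (Pscale a^-1 H)) => //; [by rewrite mulVf | ring]. Qed.

Lemma classify : (forall a b c, P a b c) \/
  exists s, (s = 1 \/ s = -1) /\ forall a b c, P a b c <-> (c = 0 /\ b = s * a).
Proof.
have H2 : P 1 1 0 -> P 1 (-1) 0 -> forall a b c, P a b c.
  move=> Ha Hb; apply: Pall.
    by apply: (Peq (Pscale 2^-1 (Padd Ha Hb))); field; exact: two.
  by apply: (Peq (Pscale 2^-1 (Padd Ha (Pscale (-1) Hb)))); field; exact: two.
have Hone : P 1 1 0 \/ P 1 (-1) 0.
  case: Pnd => a [b [c [Ha H]]].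
  have [_ _ H'] := Pid H; have [_ _ H''] := Pid H'.
  have {}H : P a b 0 by apply: (Peq H'') => //; rewrite opprK.
  have [Hs Hd] := Psym H.
  case: (eqVneq (a + b) 0) => Hab.
    case: (eqVneq (a - b) 0) => Hab'.
      exfalso; move/eqP: Ha; apply.
      have : 2 * a = 0 by rewrite -[RHS](addr0 0) -{1}Hab -Hab'; ring.
      by move/eqP; rewrite mulf_eq0 (negPf two) /= => /eqP.
    right; apply: (Peq (Pnorm Hab' Hd)) => //.
    by rewrite -[b - a]opprB mulrN mulVf.
  left; apply: (Peq (Pnorm Hab Hs)) => //; by rewrite mulVf.
have Hc : forall s, (s = 1 \/ s = -1) -> P 1 s 0 -> ~ P 1 (-s) 0 ->
    forall a b c, P a b c <-> (c = 0 /\ b = s * a).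
  move=> s Hs H1 Hn a b c; split; last first.
    by case=> -> ->; apply: (Peq (Pscale a H1)); ring.
  move=> H.
  have Hc0 : c = 0.
    apply/eqP/negP => Hc; apply: Hn.
    have [_ H' _] := Pid H.
    have H3 : P 1 0 0 by apply: (Peq (Pscale c^-1 H')); rewrite ?mulr0 // mulVf //; apply/negP.
    have [_ _ H4] := Pid H3.
    have H5 : P 0 1 0 by apply: (Peq (Pscale (-1) H4)); ring.
    by apply: (Peq (Padd H3 (Pscale (-s) H5))); ring.
  split => //; subst c.
  have [Hs' Hd] := Psym H.
  case: Hs => Hs; subst s.
    case: (eqVneq (a - b) 0) => Hab; first by apply/eqP; rewrite mul1r eq_sym -subr_eq0 Hab.
    exfalso; apply: Hn; apply: (Peq (Pnorm Hab Hd)) => //.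
    by rewrite -[b - a]opprB mulrN mulVf.
  case: (eqVneq (a + b) 0) => Hab.
    by apply/eqP; rewrite mulN1r -subr_eq0 opprK addrC Hab.
  exfalso; apply: Hn; apply: (Peq (Pnorm Hab Hs')) => //.
  by rewrite mulVf // opprK.
case: (classic (P 1 1 0)) => Ha; case: (classic (P 1 (-1) 0)) => Hb.
- by left; apply: H2.
- right; exists 1; split; first by left.
  by apply: Hc => //; left.
- right; exists (-1); split; first by right.
  by apply: Hc => //; [right|rewrite opprK].
- by exfalso; case: Hone.
Qed.
End Classify.

Section Proof.
Variable k : fieldType.
Variable I : Ob k -> Prop.
Variable q : {poly k}.
Hypothesis Hch : (2 \notin [pchar k])%N.
Hypothesis HI : is_ideal I.
Hypothesis HC : closed_ideal I.
Hypothesis HJ : forall p, J_of I p <-> exists r, p = q * r.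
Hypothesis Hq : q != 0.

Lemma two_nz : (2 : k) != 0.
Proof.
move: Hch; rewrite inE /=. by case: eqP.
Qed.

Lemma I0 : I (zeroO k). Proof. by case: HI. Qed.
Lemma IaddO x y : I x -> I y -> I (addO x y). Proof. by case: HI => _ H _ _; apply: H. Qed.
Lemma IscaleO a x : I x -> I (scaleO a x). Proof. by case: HI => _ _ H _; apply: H. Qed.
Lemma Ibr x y : I x -> I (bracket x y). Proof. by case: HI => _ _ _ H; apply: H. Qed.

Lemma Ieq x y : I x -> x = y -> I y. Proof. by move=> H <-. Qed.
Arguments Ieq {x y}.

Lemma Iadd a0 a1 a2 b0 b1 b2 : I (mkO a0 a1 a2) -> I (mkO b0 b1 b2) ->
  I (mkO (a0 + b0) (a1 + b1) (a2 + b2)).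
Proof. exact: IaddO. Qed.

Lemma Ineg a0 a1 a2 : I (mkO a0 a1 a2) -> I (mkO (- a0) (- a1) (- a2)).
Proof. by move/(IscaleO (-1)); rewrite /scaleO /= !scaleN1r. Qed.

Lemma Imul r a0 a1 a2 : I (mkO a0 a1 a2) -> I (mkO (r * a0) (r * a1) (r * a2)).
Proof.
move=> H; apply/HC => y.
have -> : bracket (mkO (r * a0) (r * a1) (r * a2)) y = bracket (mkO a0 a1 a2) (mkO (r * c0 y) (r * c1 y) (r * c2 y)).
  by rewrite /bracket /mkO /c0 /c1 /c2 /=; congr (_, _, _); ring.
exact: Ibr.
Qed.

Lemma Ibr3 a0 a1 a2 y0 y1 y2 : I (mkO a0 a1 a2) ->
  I (mkO (- (a1 * y2 - a2 * y1)) ((a2 * y0 - a0 * y2) * 'X) ((a0 * y1 - a1 * y0) * (- ('X - 1)))).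
Proof. move=> H; exact (Ibr _ (mkO y0 y1 y2) H). Qed.
Arguments Ibr3 {a0 a1 a2}.
Arguments Imul r {a0 a1 a2}.
Arguments Iadd {a0 a1 a2 b0 b1 b2}.
Arguments Ineg {a0 a1 a2}.

Lemma I_dvd x : I x -> exists z0 z1 z2, x = mkO (q * z0) (q * z1) (q * z2).
Proof.
case: x => [[a0 a1] a2] H.
have [z0 E0] : exists r, a0 = q * r by apply/HJ; exists a1, a2.
have [z1 E1] : exists r, a1 = q * r.
  apply/HJ; have := Ibr3 0 0 (-1) H; rewrite (_ : - (a1 * -1 - a2 * 0) = a1); last by ring.
  by move=> H'; do 2 eexists; exact: H'.
have [z2 E2] : exists r, a2 = q * r.
  apply/HJ; have := Ibr3 0 1 0 H; rewrite (_ : - (a1 * 0 - a2 * 1) = a2); last by ring.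
  by move=> H'; do 2 eexists; exact: H'.
by exists z0, z1, z2; rewrite E0 E1 E2.
Qed.

Definition XX : {poly k} := 'X * ('X - 1).
Ltac hev := rewrite !(hornerD, hornerN, hornerM, hornerX, hornerC, hornerCM).
Ltac eqtac := rewrite /= /addO /scaleO /w0 /w1 /w2 /mkO /c0 /c1 /c2 /zeroO /XX /=;
  congr (_, _, _); rewrite -!mul_polyC ?polyCM ?polyCN; ring.

Lemma Mgen : exists a1 a2, I (mkO q a1 a2).
Proof. by apply/HJ; exists 1; rewrite mulr1. Qed.

Lemma M_sub r0 r1 r2 : I (mkO (q * XX * r0) (q * XX * r1) (q * XX * r2)).
Proof.
have [a1 [a2 H]] := Mgen.
have H1 : forall r, I (mkO 0 (q * XX * r) 0).
  move=> r; have := Imul (- r) (Ibr3 1 0 0 (Ibr3 0 1 0 H)).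
  move/Ieq; apply; rewrite /mkO /XX; congr (_, _, _); ring.
have H2 : forall r, I (mkO 0 0 (q * XX * r)).
  move=> r; have := Imul (- r) (Ibr3 1 0 0 (Ibr3 0 0 1 H)).
  move/Ieq; apply; rewrite /mkO /XX; congr (_, _, _); ring.
have H0 : forall r, I (mkO (q * XX * r) 0 0).
  move=> r; have := Ibr3 0 0 (-1) (H1 r).
  move/Ieq; apply; rewrite /mkO /XX; congr (_, _, _); ring.
have := Iadd (Iadd (H0 r0) (H1 r1)) (H2 r2).
by rewrite !addr0 !add0r.
Qed.

Lemma decomp (p : {poly k}) : exists a b r, p = a%:P * 'X - b%:P * ('X - 1) + XX * r.
Proof.
set g := p - (p.[1]%:P * 'X - p.[0]%:P * ('X - 1)).
have g0 : root g 0 by rewrite /root /g !hornerE; apply/eqP; ring.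
have [g1 Eg1] := factor_theorem _ _ g0.
have g1r : root g1 1.
  have : g.[1] = 0 by rewrite /g !hornerE; ring.
  rewrite Eg1 !hornerE => h; rewrite /root; apply/eqP; rewrite -h; ring.
have [g2 Eg2] := factor_theorem _ _ g1r.
exists p.[1], p.[0], g2.
have E : p = g + (p.[1]%:P * 'X - p.[0]%:P * ('X - 1)) by rewrite /g subrK.
rewrite {1}E Eg1 Eg2 /XX polyC1 polyC0; ring.
Qed.

Lemma ev1 a b r : (a%:P * 'X - b%:P * ('X - 1) + XX * r).[1] = a.
Proof. rewrite /XX !hornerE; ring. Qed.
Lemma ev0 a b r : (a%:P * 'X - b%:P * ('X - 1) + XX * r).[0] = b.
Proof. rewrite /XX !hornerE; ring. Qed.

Definition E1 a b c := I (mkO (q * 'X * a%:P) (q * 'X * b%:P) (q * 'X * c%:P)).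
Definition E0 a b c := I (mkO (q * ('X - 1) * a%:P) (q * ('X - 1) * b%:P) (q * ('X - 1) * c%:P)).

Lemma charI0 a0 a1 a2 b0 b1 b2 r0 r1 r2 :
  I (mkO (q * (a0%:P * 'X - b0%:P * ('X - 1) + XX * r0))
         (q * (a1%:P * 'X - b1%:P * ('X - 1) + XX * r1))
         (q * (a2%:P * 'X - b2%:P * ('X - 1) + XX * r2)))
  <-> E1 a0 a1 a2 /\ E0 b0 b1 b2.
Proof.
split.
  move=> H; split.
    have := Iadd (Imul 'X H) (M_sub (- (a0%:P - b0%:P + 'X * r0)) (- (a1%:P - b1%:P + 'X * r1)) (- (a2%:P - b2%:P + 'X * r2))).
    move/Ieq; apply; rewrite /mkO /XX; congr (_, _, _); ring.
  have := Iadd (Imul ('X - 1) H) (M_sub (- (a0%:P - b0%:P + ('X - 1) * r0)) (- (a1%:P - b1%:P + ('X - 1) * r1)) (- (a2%:P - b2%:P + ('X - 1) * r2))).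
  move/Ieq; apply; rewrite /mkO /XX; congr (_, _, _); ring.
case=> H1 H0.
have := Iadd (Iadd H1 (Ineg H0)) (M_sub r0 r1 r2).
move/Ieq; apply; rewrite /mkO /XX; congr (_, _, _); ring.
Qed.

Lemma charI z0 z1 z2 : I (mkO (q * z0) (q * z1) (q * z2)) <->
  E1 z0.[1] z1.[1] z2.[1] /\ E0 z0.[0] z1.[0] z2.[0].
Proof.
have [a0 [b0 [r0 ->]]] := decomp z0.
have [a1 [b1 [r1 ->]]] := decomp z1.
have [a2 [b2 [r2 ->]]] := decomp z2.
rewrite !ev1 !ev0; exact: charI0.
Qed.

Lemma Ichar x : I x <-> exists z0 z1 z2, x = mkO (q * z0) (q * z1) (q * z2) /\
  E1 z0.[1] z1.[1] z2.[1] /\ E0 z0.[0] z1.[0] z2.[0].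
Proof.
split.
  move=> H; have [z0 [z1 [z2 E]]] := I_dvd _ H.
  by exists z0, z1, z2; split => //; apply/charI; rewrite -E.
by case=> z0 [z1 [z2 [-> H]]]; apply/charI.
Qed.

Lemma brq u0 u1 u2 y0 y1 y2 : bracket (mkO (q*u0) (q*u1) (q*u2)) (mkO y0 y1 y2) =
  mkO (q * (-(u1*y2 - u2*y1))) (q * ((u2*y0 - u0*y2)*'X)) (q * ((u0*y1 - u1*y0)*(-('X-1)))).
Proof. rewrite /bracket /mkO /c0 /c1 /c2 /=; congr (_, _, _); ring. Qed.

Lemma E1eq {a b c a' b' c'} : E1 a b c -> a = a' -> b = b' -> c = c' -> E1 a' b' c'.
Proof. by move=> H <- <- <-. Qed.
Lemma E0eq {a b c a' b' c'} : E0 a b c -> a = a' -> b = b' -> c = c' -> E0 a' b' c'.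
Proof. by move=> H <- <- <-. Qed.

Lemma E1add {a b c a' b' c'} : E1 a b c -> E1 a' b' c' -> E1 (a+a') (b+b') (c+c').
Proof. by move=> h h'; have := Iadd h h'; rewrite /E1 !polyCD !mulrDr. Qed.
Lemma E0add {a b c a' b' c'} : E0 a b c -> E0 a' b' c' -> E0 (a+a') (b+b') (c+c').
Proof. by move=> h h'; have := Iadd h h'; rewrite /E0 !polyCD !mulrDr. Qed.
Lemma E1scale l {a b c} : E1 a b c -> E1 (l*a) (l*b) (l*c).
Proof. move=> h; have := Imul l%:P h; move/Ieq; apply; rewrite /mkO !polyCM; congr (_, _, _); ring. Qed.
Lemma E0scale l {a b c} : E0 a b c -> E0 (l*a) (l*b) (l*c).
Proof. move=> h; have := Imul l%:P h; move/Ieq; apply; rewrite /mkO !polyCM; congr (_, _, _); ring. Qed.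

Lemma E1brk {a b c} (e0 e1 e2 : k) : E1 a b c -> E1 (-(b*e2 - c*e1)) (c*e0 - a*e2) 0.
Proof.
move=> H; have := Ibr _ (mkO e0%:P e1%:P e2%:P) H.
rewrite -!mulrA brq => /charI [H1 _].
by apply: (E1eq H1); rewrite !hornerE; ring.
Qed.
Lemma E0brk {a b c} (e0 e1 e2 : k) : E0 a b c -> E0 (b*e2 - c*e1) 0 (-(a*e1 - b*e0)).
Proof.
move=> H; have := Ibr _ (mkO e0%:P e1%:P e2%:P) H.
rewrite -!mulrA brq => /charI [_ H1].
by apply: (E0eq H1); rewrite !hornerE; ring.
Qed.

Lemma E1zero : E1 0 0 0.
Proof. by rewrite /E1; apply: (Ieq I0); rewrite /zeroO /mkO polyC0 !mulr0. Qed.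
Lemma E0zero : E0 0 0 0.
Proof. by rewrite /E0; apply: (Ieq I0); rewrite /zeroO /mkO polyC0 !mulr0. Qed.

Lemma E1cl a b c : E1 0 c 0 -> E1 c 0 0 -> E1 (-b) (-a) 0 -> E1 a b c.
Proof.
move=> h1 h2 h3; rewrite /E1 -!mulrA; apply/HC => -[[y0 y1] y2].
change (I (bracket (mkO (q * ('X * a%:P)) (q * ('X * b%:P)) (q * ('X * c%:P))) (mkO y0 y1 y2))).
rewrite brq; apply/charI; split.
  apply: (E1eq (E1add (E1add (E1scale y0.[1] h1) (E1scale y1.[1] h2)) (E1scale y2.[1] h3)));
  rewrite !hornerE; ring.
by apply: (E0eq E0zero); rewrite !hornerE; ring.
Qed.

Lemma E0cl a b c : E0 0 0 b -> E0 (-c) 0 (-a) -> E0 b 0 0 -> E0 a b c.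
Proof.
move=> h1 h2 h3; rewrite /E0 -!mulrA; apply/HC => -[[y0 y1] y2].
change (I (bracket (mkO (q * (('X - 1) * a%:P)) (q * (('X - 1) * b%:P)) (q * (('X - 1) * c%:P))) (mkO y0 y1 y2))).
rewrite brq; apply/charI; split.
  by apply: (E1eq E1zero); rewrite !hornerE; ring.
apply: (E0eq (E0add (E0add (E0scale y0.[0] h1) (E0scale y1.[0] h2)) (E0scale y2.[0] h3)));
rewrite !hornerE; ring.
Qed.

Lemma End : exists a b c, a != 0 /\ E1 a b c /\ exists b' c', E0 a b' c'.
Proof.
have [a1 [a2 H]] := Mgen.
have [z0 [z1 [z2 E]]] := I_dvd _ H.
have Ez : z0 = 1.
  case: E => E _ _; apply: (mulfI Hq); by rewrite -E mulr1.
move: H; rewrite E Ez => /charI [H1 H0].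
rewrite !hornerE in H1 H0.
exists 1, z1.[1], z2.[1]; split; first exact: oner_neq0.
by split => //; exists z1.[0], z2.[0].
Qed.

Lemma Idec x : I x -> exists a0 a1 a2 b0 b1 b2 r0 r1 r2,
  x = mkO (q*(a0%:P*'X - b0%:P*('X-1) + XX*r0)) (q*(a1%:P*'X - b1%:P*('X-1) + XX*r1))
          (q*(a2%:P*'X - b2%:P*('X-1) + XX*r2)) /\ E1 a0 a1 a2 /\ E0 b0 b1 b2.
Proof.
move/Ichar => [z0 [z1 [z2 [-> [H1 H0]]]]].
move: H1 H0.
have [a0 [b0 [r0 ->]]] := decomp z0.
have [a1 [b1 [r1 ->]]] := decomp z1.
have [a2 [b2 [r2 ->]]] := decomp z2.
rewrite !ev1 !ev0 => H1 H0.
by exists a0, a1, a2, b0, b1, b2, r0, r1, r2.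
Qed.

Lemma OJm md y : OJ (idmul (J_of I) md) y <-> exists r0 r1 r2, y = mkO (q * r0 * md) (q * r1 * md) (q * r2 * md).
Proof.
split.
  case: y => [[y0 y1] y2] [[p0 [/HJ [r0 ->] E0]] [p1 [/HJ [r1 ->] E1']] [p2 [/HJ [r2 ->] E2]]].
  by exists r0, r1, r2; rewrite /c0 /c1 /c2 /= in E0 E1' E2; rewrite E0 E1' E2.
case=> r0 [r1 [r2 ->]]; split.
- by exists (q * r0); split => //; apply/HJ; exists r0.
- by exists (q * r1); split => //; apply/HJ; exists r1.
- by exists (q * r2); split => //; apply/HJ; exists r2.
Qed.

Lemma case_a s1 s2 (A1 : forall a b c, E1 a b c <-> (c = 0 /\ b = s1 * a))
  (A0 : forall a b c, E0 a b c <-> (b = 0 /\ c = s2 * a)) x :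
  I x <-> sum_span (OJ (idmul (J_of I) ('X * ('X - 1))))
         [:: addO (w0 q 'X) (scaleO s1 (w1 q 'X));
             addO (w0 q ('X - 1)) (scaleO s2 (w2 q ('X - 1)))] x.
Proof.
split.
  move/Idec => [a0 [a1 [a2 [b0 [b1 [b2 [r0 [r1 [r2 [-> [H1 H0]]]]]]]]]]].
  move/A1: H1 => [-> ->]; move/A0: H0 => [-> ->].
  exists (mkO (q*r0*('X * ('X - 1))) (q*r1*('X * ('X - 1))) (q*r2*('X * ('X - 1)))); split.
    by apply/OJm; exists r0, r1, r2.
  exists [:: a0; -b0]; split => //.
  rewrite /= /addO /scaleO /w0 /w1 /w2 /mkO /c0 /c1 /c2 /zeroO /XX /=.
  congr (_, _, _); rewrite -!mul_polyC ?polyCM ?polyCN; ring.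
case=> y [/OJm [r0 [r1 [r2 ->]]] [cs [Hsz ->]]].
case: cs Hsz => [|l [|mm [|]]] //= _.
apply/Ichar; exists (r0 * XX + l%:P * 'X + mm%:P * ('X - 1)), (r1 * XX + (l * s1)%:P * 'X),
  (r2 * XX + (mm * s2)%:P * ('X - 1)); split; first eqtac.
by split; [apply/A1 | apply/A0]; rewrite /XX; hev; split; ring.
Qed.

Lemma case_b s (A1 : forall a b c, E1 a b c)
  (A0 : forall a b c, E0 a b c <-> (b = 0 /\ c = s * a)) :
     (forall x, I x <->
       sum_span (OJ (idmul (J_of I) ('X * ('X - 1))))
         [:: w0 q 'X; w1 q 'X; w2 q 'X;
             addO (w0 q ('X - 1)) (scaleO s (w2 q ('X - 1)))] x) /\
     (forall x, I x <->
       sum_span (OJ (idmul (J_of I) 'X)) [:: addO (w0 q 1) (scaleO s (w2 q 1))] x).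
Proof.
split=> x; split.
- move/Idec => [a0 [a1 [a2 [b0 [b1 [b2 [r0 [r1 [r2 [-> [H1 H0]]]]]]]]]]].
  move/A0: H0 => [-> ->].
  exists (mkO (q*r0*('X * ('X - 1))) (q*r1*('X * ('X - 1))) (q*r2*('X * ('X - 1)))); split.
    by apply/OJm; exists r0, r1, r2.
  by exists [:: a0; a1; a2; -b0]; split => //; eqtac.
- case=> y [/OJm [r0 [r1 [r2 ->]]] [cs [Hsz ->]]].
  case: cs Hsz => [|l0 [|l1 [|l2 [|mm [|]]]]] //= _.
  apply/Ichar; exists (r0 * XX + l0%:P * 'X + mm%:P * ('X - 1)), (r1 * XX + l1%:P * 'X),
    (r2 * XX + l2%:P * 'X + (mm * s)%:P * ('X - 1)); split; first eqtac.
  split; first exact: A1.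
  by apply/A0; rewrite /XX; hev; split; ring.
- move/Idec => [a0 [a1 [a2 [b0 [b1 [b2 [r0 [r1 [r2 [-> [H1 H0]]]]]]]]]]].
  move/A0: H0 => [-> ->].
  exists (mkO (q*(a0%:P - b0%:P + ('X - 1) * r0)*'X) (q*(a1%:P + ('X - 1) * r1)*'X)
              (q*(a2%:P - (s * b0)%:P + ('X - 1) * r2)*'X)); split.
    by apply/OJm; do 3 eexists.
  by exists [:: b0]; split => //; eqtac.
- case=> y [/OJm [r0 [r1 [r2 ->]]] [cs [Hsz ->]]].
  case: cs Hsz => [|l [|]] //= _.
  apply/Ichar; exists (r0 * 'X + l%:P), (r1 * 'X), (r2 * 'X + (l * s)%:P); split; first eqtac.
  split; first exact: A1.
  by apply/A0; hev; split; ring.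
Qed.

Lemma case_c s (A1 : forall a b c, E1 a b c <-> (c = 0 /\ b = s * a))
  (A0 : forall a b c, E0 a b c) :
     (forall x, I x <->
       sum_span (OJ (idmul (J_of I) ('X * ('X - 1))))
         [:: addO (w0 q 'X) (scaleO s (w1 q 'X));
             w0 q ('X - 1); w1 q ('X - 1); w2 q ('X - 1)] x) /\
     (forall x, I x <->
       sum_span (OJ (idmul (J_of I) ('X - 1))) [:: addO (w0 q 1) (scaleO s (w1 q 1))] x).
Proof.
split=> x; split.
- move/Idec => [a0 [a1 [a2 [b0 [b1 [b2 [r0 [r1 [r2 [-> [H1 H0]]]]]]]]]]].
  move/A1: H1 => [-> ->].
  exists (mkO (q*r0*('X * ('X - 1))) (q*r1*('X * ('X - 1))) (q*r2*('X * ('X - 1)))); split.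
    by apply/OJm; exists r0, r1, r2.
  by exists [:: a0; -b0; -b1; -b2]; split => //; eqtac.
- case=> y [/OJm [r0 [r1 [r2 ->]]] [cs [Hsz ->]]].
  case: cs Hsz => [|l [|m0 [|m1 [|m2 [|]]]]] //= _.
  apply/Ichar; exists (r0 * XX + l%:P * 'X + m0%:P * ('X - 1)), (r1 * XX + (l * s)%:P * 'X + m1%:P * ('X - 1)),
    (r2 * XX + m2%:P * ('X - 1)); split; first eqtac.
  split; last exact: A0.
  by apply/A1; rewrite /XX; hev; split; ring.
- move/Idec => [a0 [a1 [a2 [b0 [b1 [b2 [r0 [r1 [r2 [-> [H1 H0]]]]]]]]]]].
  move/A1: H1 => [-> ->].
  exists (mkO (q*(a0%:P - b0%:P + 'X * r0)*('X - 1)) (q*((s * a0)%:P - b1%:P + 'X * r1)*('X - 1))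
              (q*(- b2%:P + 'X * r2)*('X - 1))); split.
    by apply/OJm; do 3 eexists.
  by exists [:: a0]; split => //; eqtac.
- case=> y [/OJm [r0 [r1 [r2 ->]]] [cs [Hsz ->]]].
  case: cs Hsz => [|l [|]] //= _.
  apply/Ichar; exists (r0 * ('X - 1) + l%:P), (r1 * ('X - 1) + (l * s)%:P), (r2 * ('X - 1)); split; first eqtac.
  split; last exact: A0.
  by apply/A1; hev; split; ring.
Qed.

Lemma case_d (A1 : forall a b c, E1 a b c) (A0 : forall a b c, E0 a b c) x :
  I x <-> OJ (J_of I) x.
Proof.
split.
  move/Ichar => [z0 [z1 [z2 [-> _]]]].
  by split; apply/HJ; [exists z0 | exists z1 | exists z2].
case: x => [[x0 x1] x2] []; rewrite /c0 /c1 /c2 /= => /HJ [r0 ->] /HJ [r1 ->] /HJ [r2 ->].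
apply/Ichar; exists r0, r1, r2; split => //.
Qed.

Lemma Pid1 a b c : E1 a b c -> [/\ E1 0 c 0, E1 c 0 0 & E1 (-b) (-a) 0].
Proof.
move=> H; split.
- by apply: (E1eq (E1brk 1 0 0 H)); ring.
- by apply: (E1eq (E1brk 0 1 0 H)); ring.
- by apply: (E1eq (E1brk 0 0 1 H)); ring.
Qed.

Lemma Pid0 a b c : E0 a c b -> [/\ E0 0 0 c, E0 c 0 0 & E0 (-b) 0 (-a)].
Proof.
move=> H; split.
- by apply: (E0eq (E0brk 1 0 0 H)); ring.
- by apply: (E0eq (E0brk 0 0 1 H)); ring.
- by apply: (E0eq (E0brk 0 1 0 H)); ring.
Qed.

Lemma main :
  (exists s1 s2 : k, (s1 = 1 \/ s1 = -1) /\ (s2 = 1 \/ s2 = -1) /\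
     forall x, I x <->
       sum_span (OJ (idmul (J_of I) ('X * ('X - 1))))
         [:: addO (w0 q 'X) (scaleO s1 (w1 q 'X));
             addO (w0 q ('X - 1)) (scaleO s2 (w2 q ('X - 1)))] x)
  \/
  (exists s : k, (s = 1 \/ s = -1) /\
     (forall x, I x <->
       sum_span (OJ (idmul (J_of I) ('X * ('X - 1))))
         [:: w0 q 'X; w1 q 'X; w2 q 'X;
             addO (w0 q ('X - 1)) (scaleO s (w2 q ('X - 1)))] x) /\
     (forall x, I x <->
       sum_span (OJ (idmul (J_of I) 'X)) [:: addO (w0 q 1) (scaleO s (w2 q 1))] x))
  \/
  (exists s : k, (s = 1 \/ s = -1) /\
     (forall x, I x <->
       sum_span (OJ (idmul (J_of I) ('X * ('X - 1))))
         [:: addO (w0 q 'X) (scaleO s (w1 q 'X));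
             w0 q ('X - 1); w1 q ('X - 1); w2 q ('X - 1)] x) /\
     (forall x, I x <->
       sum_span (OJ (idmul (J_of I) ('X - 1))) [:: addO (w0 q 1) (scaleO s (w1 q 1))] x))
  \/
  (forall x, I x <-> OJ (J_of I) x).
Proof.
have [a [b [c [Ha [H1 [b' [c' H0]]]]]]] := End.
have C1 := @classify k E1 two_nz (@E1add) (@E1scale) Pid1 E1cl (ex_intro _ a (ex_intro _ b (ex_intro _ c (conj Ha H1)))).
have C0 := @classify k (fun a b c => E0 a c b) two_nz
  (fun a b c a' b' c' => @E0add a c b a' c' b') (fun l a b c => @E0scale l a c b) Pid0
  (fun a b c h1 h2 h3 => @E0cl a c b h1 h3 h2) (ex_intro _ a (ex_intro _ c' (ex_intro _ b' (conj Ha H0)))).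
case: C1 => [A1 | [s1 [Hs1 A1]]]; case: C0 => [A0' | [s0 [Hs0 A0']]].
- have A0 : forall x y z, E0 x y z by move=> x y z; apply: (A0' x z y).
  by right; right; right; exact: (case_d A1 A0).
- have A0 : forall x y z, E0 x y z <-> (y = 0 /\ z = s0 * x) by move=> x y z; apply: (A0' x z y).
  right; left; exists s0; split => //; exact: case_b.
- have A0 : forall x y z, E0 x y z by move=> x y z; apply: (A0' x z y).
  right; right; left; exists s1; split => //; exact: case_c.
- have A0 : forall x y z, E0 x y z <-> (y = 0 /\ z = s0 * x) by move=> x y z; apply: (A0' x z y).
  left; exists s1, s0; do 2 split => //; exact: case_a.
Qed.
End Proof.

Theorem proposition4p10 (k : fieldType) (I : Ob k -> Prop) (q : {poly k}) :
  (2 \notin [pchar k])%N ->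
  is_ideal I -> closed_ideal I ->
  (forall p, J_of I p <-> exists r, p = q * r) ->
  q != 0 ->
  (* (a) *)
  (exists s1 s2 : k, (s1 = 1 \/ s1 = -1) /\ (s2 = 1 \/ s2 = -1) /\
     forall x, I x <->
       sum_span (OJ (idmul (J_of I) ('X * ('X - 1))))
         [:: addO (w0 q 'X) (scaleO s1 (w1 q 'X));
             addO (w0 q ('X - 1)) (scaleO s2 (w2 q ('X - 1)))] x)
  \/
  (* (b) *)
  (exists s : k, (s = 1 \/ s = -1) /\
     (forall x, I x <->
       sum_span (OJ (idmul (J_of I) ('X * ('X - 1))))
         [:: w0 q 'X; w1 q 'X; w2 q 'X;
             addO (w0 q ('X - 1)) (scaleO s (w2 q ('X - 1)))] x) /\
     (forall x, I x <->
       sum_span (OJ (idmul (J_of I) 'X)) [:: addO (w0 q 1) (scaleO s (w2 q 1))] x))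
  \/
  (* (c) *)
  (exists s : k, (s = 1 \/ s = -1) /\
     (forall x, I x <->
       sum_span (OJ (idmul (J_of I) ('X * ('X - 1))))
         [:: addO (w0 q 'X) (scaleO s (w1 q 'X));
             w0 q ('X - 1); w1 q ('X - 1); w2 q ('X - 1)] x) /\
     (forall x, I x <->
       sum_span (OJ (idmul (J_of I) ('X - 1))) [:: addO (w0 q 1) (scaleO s (w1 q 1))] x))
  \/
  (* (d) *)
  (forall x, I x <-> OJ (J_of I) x).
Proof.
move=> Hch HI HC HJ Hq.
exact: (@main k I q Hch HI HC HJ Hq).
Qed.
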